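(* Let $1\le\ell\le n$, let $u,e\in\mathbb{R}^{\binom{n}{\ell}}$ and $v=u+e$. Then \[\|\mathbf{V}(v)-\mathbf{V}(u)\|_F^2 \le 3\ell^2\|e\|^2\big(2\|u\|^2+\|e\|^2\big).\] In particular, if $v_0\in\mathbb{R}^{\binom{n}{\ell}}$ is a unit vector and $v_0 = v^{(m)} + v^\perp$ with $v^{(m)}$ orthogonal to $v^\perp$, then $\|\mathbf{V}(v_0)-\mathbf{V}(v^{(m)})\|_F^2\le 9\ell^2\|v^\perp\|^2$.
   Context: Vectors in $\mathbb{R}^{\binom{n}{\ell}}$ are indexed by subsets $S\subseteq[n]$ with $|S|=\ell$. For such a vector $v$, the voting matrix $\mathbf{V}(v)$ is the symmetric $n\times n$ matrix with $\mathbf{V}_{ii}(v)=0$ and, for $i\ne j$, $\mathbf{V}_{ij}(v)=\frac12\sum_{|S|=|T|=\ell} v_Sv_T\mathbf{1}_{S\triangle T=\{i,j\}}$. $\|\cdot\|_F$ is the Frobenius norm. *)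

(* Defs.v *)
From HB Require Import structures.
From mathcomp Require Import all_boot all_order all_algebra.
Set Implicit Arguments. Unset Strict Implicit. Unset Printing Implicit Defensive.
Import Order.TTheory GRing.Theory Num.Theory.
Local Open Scope ring_scope.

(* Index set of R^{binom n l}: the l-element subsets of [n] = 'I_n. *)
Definition lsub (n l : nat) := {S : {set 'I_n} | #|S| == l}.

Definition lvec (R : realFieldType) (n l : nat) := lsub n l -> R.

Definition sqnorm (R : realFieldType) n l (v : lvec R n l) : R :=
  \sum_(S : lsub n l) v S ^+ 2.

Definition dotv (R : realFieldType) n l (u w : lvec R n l) : R :=
  \sum_(S : lsub n l) u S * w S.

Definition voting (R : realFieldType) n l (v : lvec R n l) : 'M[R]_n :=
  \matrix_(i < n, j < n)
    if i == j then 0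
    else 2^-1 * \sum_(S : lsub n l) \sum_(T : lsub n l)
        (if ((val S :\: val T) :|: (val T :\: val S)) == [set i; j]
         then v S * v T else 0).

Definition sqfrob (R : realFieldType) n (A : 'M[R]_n) : R :=
  \sum_(i < n) \sum_(j < n) A i j ^+ 2.

(* Main.v *)
Require Import Defs.
From HB Require Import structures.
From mathcomp Require Import all_boot all_order all_algebra.
From mathcomp Require Import ring lra.
From Stdlib Require FunctionalExtensionality.
Import Order.TTheory GRing.Theory Num.Theory.
Local Open Scope ring_scope.
Set Implicit Arguments. Unset Strict Implicit. Unset Printing Implicit Defensive.

Definition Ind n l (S T : lsub n l) (i j : 'I_n) : bool :=
  ((val S :\: val T) :|: (val T :\: val S)) == [set i; j].
Definition cc n l (S T : lsub n l) (i j : 'I_n) : bool :=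
  [&& i \in val S, j \in val T & Ind S T i j].

Lemma Ind_sym n l (S T : lsub n l) i j : Ind S T i j = Ind T S i j.
Proof. by rewrite /Ind setUC. Qed.
Lemma Ind_swap n l (S T : lsub n l) i j : Ind S T i j = Ind S T j i.
Proof. by rewrite /Ind [[set j; i]]setUC. Qed.
Lemma cc_sym n l (S T : lsub n l) i j : cc S T i j = cc T S j i.
Proof. by rewrite /cc Ind_sym Ind_swap andbCA. Qed.

Lemma noboth n (A B : {set 'I_n}) i j : #|A| = #|B| ->
  (A :\: B :|: B :\: A) = [set i; j] -> i \in A -> i \notin B -> j \in A -> j \notin B -> False.
Proof.
move=> hc H iA iB jA jB.
have sub : B \subset A.
  apply/subsetP => x xB; apply/negPn/negP => xA.
  have : x \in [set i; j] by rewrite -H !inE xB xA orbT.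
  by rewrite !inE => /orP[/eqP|/eqP] ex; [move: iB|move: jB]; rewrite -ex xB.
have : B == A by rewrite eqEcard sub hc leqnn.
by move/eqP => eBA; move: iB; rewrite eBA iA.
Qed.

Lemma Ind_split n l (S T : lsub n l) i j : i != j ->
  Ind S T i j = cc S T i j || cc S T j i.
Proof.
move=> ij; rewrite /cc (Ind_swap S T j i).
case H: (Ind S T i j); last by rewrite !andbF ?orbF.
idtac.
rewrite !andbT.
move: (H) => /eqP H'.
have hc : #|val S| = #|val T| by rewrite (eqP (valP S)) (eqP (valP T)).
have hi : i \in [set i; j] by rewrite !inE eqxx.
have hj : j \in [set i; j] by rewrite !inE eqxx orbT.
rewrite -H' !inE in hi hj.
case iS: (i \in val S); case iT: (i \in val T); case jS: (j \in val S); case jT: (j \in val T);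
  rewrite ?iS ?iT ?jS ?jT /= in hi hj * => //.
- exfalso; apply: (noboth hc H'); by rewrite ?iS ?iT ?jS ?jT.
- exfalso; rewrite setUC in H'; apply: (noboth (esym hc) H'); by rewrite ?iS ?iT ?jS ?jT.
Qed.

Lemma cc_excl n l (S T : lsub n l) i j : ~~ (cc S T i j && cc S T j i).
Proof.
apply/negP => /andP[/and3P[iS jT /eqP H] /and3P[jS iT _]].
have : i \in [set i; j] by rewrite !inE eqxx.
by rewrite -H !inE iS iT.
Qed.

Lemma cc_val n l (S T : lsub n l) i j : cc S T i j -> val T = (val S :\ i) :|: [set j].
Proof.
case/and3P => iS jT /eqP H; apply/setP => x.
have hx : (x \in (val S :\: val T) :|: (val T :\: val S)) = (x \in [set i; j]) by rewrite H.
have hi : (i \in (val S :\: val T) :|: (val T :\: val S)) = (i \in [set i; j]) by rewrite H.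
rewrite !inE in hx; rewrite !inE eqxx iS /= in hi.
rewrite !inE.
case: (x =P j) => [->|xj]; first by rewrite jT orbT.
case: (x =P i) => [->|xi] /=.
  by move: hi; rewrite andbT orbF; case: (i \in sval T).
move/eqP: xi => xi; move/eqP: xj => xj.
rewrite (negbTE xi) (negbTE xj) /= in hx; rewrite orbF.
by move: hx; case: (x \in \val S); case: (x \in \val T).
Qed.

Lemma cc_uniqT n l (S T1 T2 : lsub n l) i j : cc S T1 i j -> cc S T2 i j -> T1 = T2.
Proof. by move=> h1 h2; apply: val_inj; rewrite /=; rewrite (cc_val h1) (cc_val h2). Qed.
Lemma cc_uniqS n l (S1 S2 T : lsub n l) i j : cc S1 T i j -> cc S2 T i j -> S1 = S2.
Proof. rewrite !(cc_sym _ T) => h1 h2; exact: cc_uniqT h1 h2. Qed.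

Lemma CS (R : realFieldType) (I : finType) (f g : I -> R) :
  (\sum_k f k * g k) ^+ 2 <= (\sum_k f k ^+ 2) * (\sum_k g k ^+ 2).
Proof.
set F := \sum_k f k ^+ 2; set G := \sum_k g k ^+ 2; set P := \sum_k f k * g k.
have e1 : F * G = \sum_k \sum_m f k ^+ 2 * g m ^+ 2.
  by rewrite /F big_distrl; apply: eq_bigr => k _; rewrite big_distrr.
have e2 : G * F = \sum_k \sum_m g k ^+ 2 * f m ^+ 2.
  by rewrite /G big_distrl; apply: eq_bigr => k _; rewrite big_distrr.
have e3 : P ^+ 2 = \sum_k \sum_m (f k * g k) * (f m * g m).
  by rewrite expr2 /P big_distrl; apply: eq_bigr => k _; rewrite big_distrr.
have E : \sum_k \sum_m (f k * g m - f m * g k) ^+ 2 = F * G + G * F - 2%:R * P ^+ 2.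
  rewrite e1 e2 e3 mulr_sumr -big_split -sumrB /=; apply: eq_bigr => k _.
  rewrite mulr_sumr -big_split -sumrB /=; apply: eq_bigr => m _; ring.
have : 0 <= \sum_k \sum_m (f k * g m - f m * g k) ^+ 2.
  by apply: sumr_ge0 => k _; apply: sumr_ge0 => m _; apply: sqr_ge0.
rewrite E mulrC => h; nra.
Qed.

Lemma CS2 (R : realFieldType) (I J : finType) (c : I -> J -> bool) (x : I -> R) (y : J -> R) :
  (\sum_S \sum_T (if c S T then x S * y T else 0)) ^+ 2 <=
  (\sum_S \sum_T (if c S T then x S ^+ 2 else 0)) * (\sum_S \sum_T (if c S T then y T ^+ 2 else 0)).
Proof.
rewrite !pair_big /=.
have := CS (fun p : I * J => if c p.1 p.2 then x p.1 else 0) (fun p : I * J => if c p.1 p.2 then y p.2 else 0).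
congr (_ <= _ * _); [congr (_ ^+ 2)|..]; apply: eq_bigr => p _; case: ifP => _ //;
  rewrite ?mulr0 // expr0n.
all: by [].
Qed.

Lemma sum_uniq (R : realFieldType) (I : finType) (c : pred I) (a : R) :
  (forall T1 T2, c T1 -> c T2 -> T1 = T2) -> 0 <= a ->
  \sum_T (if c T then a else 0) <= a.
Proof.
move=> hu ha; case: (pickP c) => [T0 cT0|none].
  rewrite (bigD1 T0) //= cT0 big1 ?addr0 // => T neq.
  case: ifP => // cT; by rewrite (hu _ _ cT cT0) eqxx in neq.
by rewrite big1 // => T _; rewrite none.
Qed.

Definition Bm (R : realFieldType) n l (x y : lvec R n l) (i j : 'I_n) : R :=
  \sum_(S : lsub n l) \sum_(T : lsub n l) (if Ind S T i j then x S * y T else 0).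
Definition Pm (R : realFieldType) n l (x y : lvec R n l) (i j : 'I_n) : R :=
  \sum_(S : lsub n l) \sum_(T : lsub n l) (if cc S T i j then x S * y T else 0).
Definition av (R : realFieldType) n l (x : lvec R n l) (i : 'I_n) : R :=
  \sum_(S : lsub n l) (if i \in val S then x S ^+ 2 else 0).

Lemma dsum_ge0 (R : realFieldType) n l (c : lsub n l -> lsub n l -> bool) (f : lsub n l -> lsub n l -> R) :
  (forall S T, 0 <= f S T) -> 0 <= \sum_S \sum_T (if c S T then f S T else 0).
Proof. by move=> h; apply: sumr_ge0 => S _; apply: sumr_ge0 => T _; case: ifP. Qed.

Lemma av_ge0 (R : realFieldType) n l (x : lvec R n l) i : 0 <= av x i.
Proof. by apply: sumr_ge0 => S _; case: ifP => // _; apply: sqr_ge0. Qed.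

Lemma Pm_bound (R : realFieldType) n l (x y : lvec R n l) i j :
  Pm x y i j ^+ 2 <= av x i * av y j.
Proof.
apply: le_trans; first exact: CS2.
apply: ler_pM.
- by apply: dsum_ge0 => S T; apply: sqr_ge0.
- by apply: dsum_ge0 => S T; apply: sqr_ge0.
- apply: ler_sum => S _; case iS: (i \in val S).
    apply: (sum_uniq (c := fun T => cc S T i j)); last exact: sqr_ge0.
    by move=> T1 T2; apply: cc_uniqT.
  by rewrite big1 // => T _; rewrite /cc iS.
- rewrite exchange_big; apply: ler_sum => T _; case jT: (j \in val T).
    apply: (sum_uniq (c := fun S => cc S T i j)); last exact: sqr_ge0.
    by move=> S1 S2; apply: cc_uniqS.
  by rewrite big1 // => S _; rewrite /cc jT andbF.
Qed.

Lemma sum_av (R : realFieldType) n l (x : lvec R n l) : \sum_i av x i = l%:R * sqnorm x.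
Proof.
rewrite /av exchange_big /sqnorm mulr_sumr; apply: eq_bigr => S _.
rewrite -big_mkcond /= sumr_const (eqP (valP S)) mulr_natl //.
Qed.

Lemma Pm_sum (R : realFieldType) n l (x y : lvec R n l) :
  \sum_i \sum_j Pm x y i j ^+ 2 <= (l%:R * sqnorm x) * (l%:R * sqnorm y).
Proof.
apply: (@le_trans _ _ (\sum_i \sum_j av x i * av y j)).
  by apply: ler_sum => i _; apply: ler_sum => j _; apply: Pm_bound.
rewrite -!sum_av big_distrl; rewrite le_eqVlt; apply/orP; left; apply/eqP/eq_bigr => i _; rewrite big_distrr //.
Qed.

Lemma Bm_split (R : realFieldType) n l (x y : lvec R n l) i j : i != j ->
  Bm x y i j = Pm x y i j + Pm x y j i.
Proof.
move=> ij; rewrite /Bm /Pm -big_split; apply: eq_bigr => S _.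
rewrite -big_split; apply: eq_bigr => T _ /=.
rewrite (Ind_split S T ij); have := cc_excl S T i j.
by case: (cc S T i j); case: (cc S T j i) => //= _; rewrite ?addr0 ?add0r.
Qed.

Lemma Bm_sym (R : realFieldType) n l (x y : lvec R n l) i j : Bm y x i j = Bm x y i j.
Proof.
rewrite /Bm exchange_big; apply: eq_bigr => S _; apply: eq_bigr => T _.
by rewrite Ind_sym mulrC.
Qed.

Lemma Bm_expand (R : realFieldType) n l (u e : lvec R n l) i j :
  Bm (fun S => u S + e S) (fun S => u S + e S) i j - Bm u u i j =
  Bm u e i j + Bm e u i j + Bm e e i j.
Proof.
rewrite /Bm -!big_split -sumrB; apply: eq_bigr => S _.
rewrite -!big_split -sumrB; apply: eq_bigr => T _ /=.
by case: ifP => _; [ring | rewrite !addr0 subrr].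
Qed.

Lemma ineq (R : realFieldType) (p q r s : R) :
  (2^-1 * ((p + q) + (p + q) + (r + s))) ^+ 2 <=
  3%:R * (p ^+ 2 + q ^+ 2) + 3%:R / 2%:R * (r ^+ 2 + s ^+ 2).
Proof.
have h1 := sqr_ge0 (p - q); have h2 := sqr_ge0 (r - s);
have h3 := sqr_ge0 ((p + q) - (r + s)).
have -> : 2^-1 * ((p + q) + (p + q) + (r + s)) = (p + q) + (r + s) / 2%:R.
  rewrite mulrC mulrDl; congr (_ + _); rewrite -mulr2n -mulr_natr; field; rewrite ?pnatr_eq0 //.
rewrite !expr2 in h1 h2 h3 *; lra.
Qed.


Lemma voting_entry (R : realFieldType) n l (w : lvec R n l) i j :
  voting w i j = if i == j then 0 else 2^-1 * Bm w w i j.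
Proof. by rewrite mxE. Qed.

Lemma part1 (R : realFieldType) (n l : nat) (u e : lvec R n l) :
  sqfrob (voting (fun S => u S + e S) - voting u)
    <= 3%:R * (l%:R) ^+ 2 * sqnorm e * (2%:R * sqnorm u + sqnorm e).
Proof.
set v := fun S => u S + e S.
pose c1 : R := 3%:R; pose c2 : R := 3%:R / 2%:R.
have key : forall i j, (voting v - voting u) i j ^+ 2 <=
   c1 * (Pm u e i j ^+ 2 + Pm u e j i ^+ 2) + c2 * (Pm e e i j ^+ 2 + Pm e e j i ^+ 2).
  move=> i j.
  have -> : (voting v - voting u) i j = voting v i j - voting u i j by rewrite !mxE.
  rewrite !voting_entry.
  case: eqP => [_|/eqP ij].
    rewrite /= subrr expr0n /=; apply: addr_ge0; apply: mulr_ge0;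
      rewrite /c1 /c2 ?divr_ge0 ?ler0n ?addr_ge0 ?sqr_ge0 //.
  rewrite /= -mulrBr Bm_expand (Bm_sym u e) !Bm_split //.
  exact: ineq.
apply: le_trans.
  by apply: ler_sum => i _; apply: ler_sum => j _; apply: key.
have sw : forall x y : lvec R n l,
    \sum_i \sum_j Pm x y j i ^+ 2 = \sum_i \sum_j Pm x y i j ^+ 2.
  by move=> x y; rewrite exchange_big.
have -> : \sum_i \sum_j (c1 * (Pm u e i j ^+ 2 + Pm u e j i ^+ 2) +
                           c2 * (Pm e e i j ^+ 2 + Pm e e j i ^+ 2)) =
   c1 * (\sum_i \sum_j Pm u e i j ^+ 2 + \sum_i \sum_j Pm u e j i ^+ 2) +
   c2 * (\sum_i \sum_j Pm e e i j ^+ 2 + \sum_i \sum_j Pm e e j i ^+ 2).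
  rewrite -!big_split !mulr_sumr -big_split; apply: eq_bigr => i _ /=.
  by rewrite -!big_split !mulr_sumr -big_split.
rewrite !sw.
have b1 := Pm_sum u e; have b2 := Pm_sum e e.
have hu : 0 <= sqnorm u by apply: sumr_ge0 => S _; apply: sqr_ge0.
have he : 0 <= sqnorm e by apply: sumr_ge0 => S _; apply: sqr_ge0.
rewrite /c1 /c2.
set Q := \sum_i _ in b1 *; set E := \sum_i _ in b2 *.
set U := sqnorm u in b1 hu *; set F := sqnorm e in b1 b2 he *.
set L := l%:R in b1 b2 *.
have -> : 3%:R * (Q + Q) + 3%:R / 2%:R * (E + E) = 6%:R * Q + 3%:R * E.
  field; by rewrite ?pnatr_eq0.
have -> : 3%:R * L ^+ 2 * F * (2%:R * U + F) = 6%:R * ((L * U) * (L * F)) + 3%:R * ((L * F) * (L * F)).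
  ring.
lra.
Qed.

Theorem lemma5 (R : realFieldType) (n l : nat) (hl1 : (1 <= l)%N) (hln : (l <= n)%N) :
  (forall u e : lvec R n l,
     let v := fun S => u S + e S in
     sqfrob (voting v - voting u)
       <= 3%:R * (l%:R) ^+ 2 * sqnorm e * (2%:R * sqnorm u + sqnorm e))
  /\
  (forall v0 vm vp : lvec R n l,
     sqnorm v0 = 1 ->
     (forall S, v0 S = vm S + vp S) ->
     dotv vm vp = 0 ->
     sqfrob (voting v0 - voting vm) <= 9%:R * (l%:R) ^+ 2 * sqnorm vp).
Proof.
split; first by move=> u e; exact: part1.
move=> v0 vm vp h1 hv hd.
have ev : v0 = (fun S => vm S + vp S).
  by apply: FunctionalExtensionality.functional_extensionality.
have hn : sqnorm v0 = sqnorm vm + sqnorm vp + 2%:R * dotv vm vp.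
  rewrite /sqnorm /dotv mulr_sumr -!big_split; apply: eq_bigr => S _ /=.
  rewrite hv; ring.
rewrite hd mulr0 addr0 h1 in hn.
have hu : 0 <= sqnorm vm by apply: sumr_ge0 => S _; apply: sqr_ge0.
have he : 0 <= sqnorm vp by apply: sumr_ge0 => S _; apply: sqr_ge0.
have hL : 0 <= (l%:R : R) ^+ 2 by apply: sqr_ge0.
apply: le_trans; first by rewrite ev; exact: part1.
set L := (l%:R : R) ^+ 2 in hL *.
set U := sqnorm vm in hn hu *; set F := sqnorm vp in hn he *.
have hF : F <= 1 by lra.
have : 0 <= L * F * (3%:R - F) by apply: mulr_ge0; [apply: mulr_ge0|lra].
have -> : 3%:R * L * F * (2%:R * U + F) = 6%:R * L * F * (U + F) - 3%:R * L * F * F by ring.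
rewrite -hn; nra.
Qed.
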